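(* For every integer $n\ge 3$, let $M_n$ be the $(n-2)\times(n-2)$ symmetric pentadiagonal matrix with entries \[ (M_n)_{ij}=\begin{cases} 2 & \text{if } i=j=1,\\ 3 & \text{if } i=j=2,\\ 4 & \text{if } i=j \text{ and } 3\le i\le n-2,\\ -1 & \text{if } |i-j|=1 \text{ or } |i-j|=2,\\ 0 & \text{if } |i-j|\ge 3. \end{cases} \] Then $\det M_n = F_{2n-3}$. *)

(* Defs.v *)
From mathcomp Require Import all_boot all_order all_algebra.
Set Implicit Arguments. Unset Strict Implicit. Unset Printing Implicit Defensive.
Import Order.TTheory GRing.Theory Num.Theory.
Local Open Scope ring_scope.

Fixpoint fib (n : nat) : nat :=
  match n with
  | 0 => 0
  | 1 => 1
  | (m.+1 as p).+1 => fib p + fib m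
  end.

(* Entry (i,j) of M_n, with 1-based indices i j (as in the paper). *)
Definition Mentry (i j : nat) : int :=
  if i == j then (if i == 1%N then 2 else if i == 2%N then 3 else 4)
  else if (`|(i%:Z - j%:Z)|%N <= 2)%N then -1 else 0.

Definition Mn (n : nat) : 'M[int]_(n - 2) :=
  \matrix_(i < n - 2, j < n - 2) Mentry i.+1 j.+1.

(* Main.v *)
Require Import Defs.
From mathcomp Require Import all_boot all_order all_algebra.
From mathcomp Require Import zify ring lra.
Set Implicit Arguments. Unset Strict Implicit. Unset Printing Implicit Defensive.
Import Order.TTheory GRing.Theory Num.Theory.
Local Open Scope ring_scope.

Lemma schur1 (F : fieldType) s (A : 'M[F]_(1 + s)) : A 0 0 != 0 ->
  \det A = A 0 0 * \det (drsubmx A - (A 0 0)^-1 *: (dlsubmx A *m ursubmx A)).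
Proof.
move=> nz.
set S := drsubmx A - _.
have E : A = block_mx 1%:M 0 ((A 0 0)^-1 *: dlsubmx A) 1%:M *m
             block_mx (ulsubmx A) (ursubmx A) 0 S.
  rewrite mulmx_block !mul1mx !mul0mx ?addr0 ?add0r.
  have -> : (A 0 0)^-1 *: dlsubmx A *m ulsubmx A = dlsubmx A.
    apply/matrixP => i j; rewrite !mxE big_ord1 !mxE (ord1 j).
    rewrite -mulrA mulrC -mulrA.
    have -> : A (lshift s 0) (lshift s 0) = A 0 0 by congr (A _ _); apply/val_inj.
    by rewrite divff //; apply: mulr1.
  rewrite /S -scalemxAl addrC subrK.
  by rewrite submxK.
rewrite {1}E det_mulmx det_lblock det_ublock !det1 mul1r det_mx11.
by rewrite mul1r !mxE; congr (A _ _ * _); apply/val_inj.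
Qed.

Definition gent (x y z : rat) (i j : nat) : rat :=
  if i == j then (if i == 0%N then x else if i == 1%N then z else 4)
  else if (i + j == 1)%N then y
  else if (i <= j + 2)%N && (j <= i + 2)%N then -1 else 0.
Definition G x y z s : 'M[rat]_s := \matrix_(i < s, j < s) gent x y z i j.

Lemma Gstep x y z s :
  drsubmx (G x y z (1 + s)) - x^-1 *: (dlsubmx (G x y z (1+s)) *m ursubmx (G x y z (1+s)))
  = G (z - y^2/x) (-1 + y/x) (4 - 1/x) s.
Proof.
apply/matrixP => i j; rewrite !mxE big_ord1 !mxE /=.
case: i j => [i Hi] [j Hj] /=.
rewrite /gent /=.
case: i Hi => [|[|i]] Hi; case: j Hj => [|[|j]] Hj //=.
all: rewrite ?add0n ?addn0 ?addnS ?addSn ?eqSS ?ltnS /= ?mulr0 ?mul0r ?subr0 //; try ring.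
Qed.

Lemma detG_step x y z s : x != 0 ->
  \det (G x y z (1 + s)) = x * \det (G (z - y^2/x) (-1 + y/x) (4 - 1/x) s).
Proof.
move=> nz.
have h00 : G x y z (1 + s) 0 0 = x by rewrite mxE.
by rewrite schur1 h00 // Gstep.
Qed.

Fixpoint g (s : nat) (a b : rat) : rat :=
  match s with 0 => a | s'.+1 => g s' (a + b) (a + 2 * b) end.

Lemma detG_ab s a b : 0 < a -> 0 <= b ->
  \det (G ((a + b) / a) (- b / a) ((2 * a + b) / a) s) = g s a b / a.
Proof.
elim: s a b => [|s IH] a b ha hb.
  by rewrite det_mx00 /= divff // gt_eqF.
have a0 : a != 0 by rewrite gt_eqF.
have ab : 0 < a + b by apply: ltr_wpDr.
have ab0 : a + b != 0 by rewrite gt_eqF.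
have x0 : (a + b) / a != 0 by rewrite mulf_neq0 // invr_eq0.
rewrite (detG_step _ _ _ x0).
have -> : (2 * a + b) / a - (- b / a) ^ 2 / ((a + b) / a)
          = ((a + b) + (a + 2 * b)) / (a + b) by field; apply/andP.
have -> : -1 + (- b / a) / ((a + b) / a) = - (a + 2 * b) / (a + b) by field; apply/andP.
have -> : 4 - 1 / ((a + b) / a) = (2 * (a + b) + (a + 2 * b)) / (a + b) by field; apply/andP.
rewrite IH //=; last by lra.
by field; apply/andP.
Qed.

Lemma g_fib s k :
  g s (fib (k.*2).+1)%:R (fib (k.*2).+2)%:R = (fib ((s + k).*2).+1)%:R.
Proof.
elim: s k => [|s IH] k //=.
have e1 : (fib (k.*2).+1)%:R + (fib (k.*2).+2)%:R = (fib ((k.+1).*2).+1)%:R :> rat.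
  by rewrite doubleS /= -natrD addnC.
have e2 : (fib (k.*2).+1)%:R + 2 * (fib (k.*2).+2)%:R = (fib ((k.+1).*2).+2)%:R :> rat.
  rewrite doubleS /= !natrD; ring.
by rewrite e1 e2 IH addnS ?addSn.
Qed.

Lemma absH (i j : nat) : (`|(i.+1)%:Z - (j.+1)%:Z|%N <= 2)%N = (i <= j+2)%N && (j <= i+2)%N.
Proof. apply/idP/andP; [move=> h; split; lia | case; lia]. Qed.

Lemma Mn_map n : map_mx (fun z : int => z%:~R : rat) (Mn n)
          = G ((1 + 1) / 1) (- 1 / 1) ((2 * 1 + 1) / 1) (n - 2).
Proof.
  apply/matrixP => i j; rewrite !mxE /Mentry /gent /= absH.
  case: (i =P j) => [->|ne].
    rewrite !eqxx; case: (nat_of_ord j) => [|[|k]] /=; rewrite ?divr1; lra.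
  have ne' : (i.+1 == j.+1)%N = false by apply/eqP => -[/val_inj].
  have ne'' : (nat_of_ord i == j)%N = false by apply/eqP => /val_inj.
  rewrite ne' ne''.
  case: ifP => h1; case: ifP => h3; rewrite ?divr1 //.
  by exfalso; move: h1 h3; lia.
Qed.

Lemma key n : g (n - 2) 1 1 = (fib ((n - 2).*2).+1)%:R.
Proof.
  have h := g_fib (n - 2) 0.
  have e1 : (fib (0.*2).+1)%:R = 1 :> rat by rewrite /= mulr1n.
  rewrite e1 addn0 in h; exact h.
Qed.

Theorem mainTheorem1 (n : nat) (hn : (3 <= n)%N) :
  \det (Mn n) = (fib (2 * n - 3))%:Z.
Proof.
apply: (@intr_inj rat).
rewrite -det_map_mx Mn_map.
rewrite detG_ab; [|exact: ltr01|exact: ler01].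
rewrite divr1 key.
have -> : (2 * n - 3 = ((n - 2).*2).+1)%N by lia.
rewrite -pmulrn; reflexivity.
Qed.
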